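(* Consider the planted clique problem with $\rho\le1/2$. Let $\ell\ge0$ be an integer, $D=2\ell+1$, and $f(Y)=\tau_\ell\Big(\frac{2}{\rho}\Big(\frac{1}{n-1}\sum_{i=2}^nY_{1i}-\frac12\Big)\Big)$. For any $0<r<1$, if $\rho^2\ge\frac{432}{r^2(n-1)}\big[\log4+3D\log(9/\rho)\big]$, then $\mathbb{E}(f(Y)-x)^2\le D^2r^{D-1}$.
   Context: Planted clique problem: $v\in\{0,1\}^n$ has i.i.d. $\mathrm{Bernoulli}(\rho)$ entries, $\rho\in(0,1)$; conditionally on $v$, for each pair $i<j$ independently, $Y_{ij}=1$ if $v_iv_j=1$ and otherwise $Y_{ij}\sim\mathrm{Bernoulli}(1/2)$; $Y_{1i}$ is the entry for pair $\{1,i\}$; target $x=v_1$. $\tau_\ell(y)=(2\ell+1)\binom{2\ell}{\ell}\int_0^yt^\ell(1-t)^\ell\,dt$, a polynomial of degree $2\ell+1$. Logarithms are natural. *)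

(* Defs.v *)
From HB Require Import structures.
From mathcomp Require Import all_boot all_order all_algebra.
From mathcomp Require Import all_classical all_reals all_analysis.
Set Implicit Arguments. Unset Strict Implicit. Unset Printing Implicit Defensive.
Import Order.TTheory GRing.Theory Num.Theory.
Import numFieldNormedType.Exports.
Local Open Scope classical_set_scope.
Local Open Scope ring_scope.

Definition oint0 (R : realType) (g : R -> R) (y : R) : R :=
  if 0 <= y then Rintegral lebesgue_measure `[0, y] g
  else - Rintegral lebesgue_measure `[y, 0] g.

Definition tau (R : realType) (l : nat) (y : R) : R :=
  (2 * l + 1)%:R * ('C(2 * l, l))%:R *
    oint0 (fun t : R => t ^+ l * (1 - t) ^+ l) y.

(* Planted clique model on vertex set 'I_n.
   v : {ffun 'I_n -> bool} is the planted indicator vector;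
   Y : {ffun 'I_n * 'I_n -> bool}, where only entries Y (i,j) with i < j are
   the observed pairs; the remaining entries are set deterministically to
   false (probability one), which does not change the law of the pairs. *)
Definition prob_v (R : realType) (n : nat) (rho : R) (v : {ffun 'I_n -> bool}) : R :=
  \prod_(i : 'I_n) (if v i then rho else 1 - rho).

Definition prob_Y_given_v (R : realType) (n : nat) (v : {ffun 'I_n -> bool})
    (Y : {ffun 'I_n * 'I_n -> bool}) : R :=
  \prod_(p : 'I_n * 'I_n)
    (if (p.1 < p.2)%N then
       (if v p.1 && v p.2 then (if Y p then 1 else 0) else 2^-1)
     else (if Y p then 0 else 1)).

Definition pc_expect (R : realType) (n : nat) (rho : R)
    (F : {ffun 'I_n -> bool} -> {ffun 'I_n * 'I_n -> bool} -> R) : R :=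
  \sum_(v : {ffun 'I_n -> bool}) \sum_(Y : {ffun 'I_n * 'I_n -> bool})
    prob_v rho v * @prob_Y_given_v R n v Y * F v Y.

(* The estimator f(Y) = tau_l ( (2/rho) ( (1/(n-1)) sum_{i=2}^n Y_{1i} - 1/2 ) ),
   where vertex 1 is the ordinal v1 (value 0). *)
Definition f_est (R : realType) (n : nat) (v1 : 'I_n) (rho : R) (l : nat)
    (Y : {ffun 'I_n * 'I_n -> bool}) : R :=
  tau l ((2 / rho) *
    ((n - 1)%:R^-1 * (\sum_(i : 'I_n | v1 != i) (Y (v1, i))%:R) - 2^-1)).

(* Main.v *)
Require Import Defs.
From HB Require Import structures.
From mathcomp Require Import all_boot all_order all_algebra.
From mathcomp Require Import all_classical all_reals all_analysis.
From mathcomp Require Import ring lra.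
Import Order.TTheory GRing.Theory Num.Theory.
Import numFieldNormedType.Exports.
Local Open Scope classical_set_scope.
Local Open Scope ring_scope.
Set Implicit Arguments. Unset Strict Implicit. Unset Printing Implicit Defensive.

Definition gp (R : realType) (l : nat) : {poly R} := 'X^l * (1 - 'X) ^+ l.

Lemma gpE (R : realType) l (t : R) : (gp R l).[t] = t ^+ l * (1 - t) ^+ l.
Proof. by rewrite /gp hornerM hornerXn horner_exp hornerD hornerN hornerX hornerC. Qed.

Definition prim (R : realType) (p : {poly R}) : {poly R} :=
  \poly_(i < (size p).+1) (if i is j.+1 then p`_j / j.+1%:R else 0).

Lemma prim_deriv (R : realType) (p : {poly R}) : (prim p)^`() = p.
Proof.
apply/polyP => i; rewrite coef_deriv coef_poly ltnS.
case: ltnP => hi.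
  by rewrite -[_ *+ i.+1]mulr_natr divfK // pnatr_eq0.
by rewrite mul0rn nth_default.
Qed.

Lemma is_derive_prim (R : realType) (p : {poly R}) x :
  is_derive x (1:R) (horner (prim p)) p.[x].
Proof.
have := @derivableP _ _ _ _ _ _ (@derivable_horner _ (prim p) x).
by rewrite -derive1E -derivE prim_deriv.
Qed.

Lemma Rint_poly (R : realType) (p : {poly R}) (a b : R) : a <= b ->
  Rintegral lebesgue_measure `[a, b] (fun t => p.[t]) =
  (prim p).[b] - (prim p).[a].
Proof.
rewrite le_eqVlt => /orP[/eqP <-|ab].
  by rewrite set_itv1 Rintegral_set1 subrr.
rewrite /Rintegral (@continuous_FTC2 _ (horner p) (horner (prim p))) //.
- apply: continuous_subspaceT => x; exact: (@continuous_horner _ p x).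
- split.
  + by move=> x _; exact: (@derivable_horner _ (prim p) x).
  + exact/cvg_at_right_filter/(@continuous_horner _ (prim p) a).
  + exact/cvg_at_left_filter/(@continuous_horner _ (prim p) b).
- by move=> x _; rewrite -derivE prim_deriv.
Qed.

Definition PP (R : realType) (l : nat) : {poly R} := prim (gp R l).

Lemma oint0E (R : realType) l (y : R) :
  oint0 (fun t : R => t ^+ l * (1 - t) ^+ l) y = (PP R l).[y] - (PP R l).[0].
Proof.
have -> : (fun t : R => t ^+ l * (1 - t) ^+ l) = (fun t => (gp R l).[t]).
  by apply: funext => t; rewrite gpE.
rewrite /oint0; case: ifPn => hy; first by rewrite Rint_poly.
by rewrite Rint_poly ?opprB // ltW // ltNge.
Qed.

Definition cc (R : realType) l : R := (2 * l + 1)%:R * ('C(2 * l, l))%:R.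

Lemma tauE (R : realType) l (y : R) : tau l y = cc R l * ((PP R l).[y] - (PP R l).[0]).
Proof. by rewrite /tau oint0E. Qed.

Lemma tau0 (R : realType) l : tau l (0 : R) = 0.
Proof. by rewrite tauE subrr mulr0. Qed.

Lemma tau1 (R : realType) l : tau l (1 : R) = 1.
Proof.
rewrite /tau /oint0 ler01.
have -> : Rintegral lebesgue_measure `[0, 1] (fun t : R => t ^+ l * (1 - t) ^+ l)
   = beta_fun l.+1 l.+1.
  by rewrite Rintegral_mkcond.
rewrite beta_fun_fact.
have hl : (l <= 2 * l)%N by rewrite mul2n -addnn leq_addr.
have e : (2 * l - l = l)%N by rewrite mul2n -addnn addnK.
have h1 : ((2 * l + 1) * 'C(2 * l, l) * (l`! * l`!))%N = ((l + l).+1)`!.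
  have := bin_fact hl; rewrite e -mulnA => ->.
  by rewrite addnn -mul2n factS addn1.
rewrite -natrM mulrA -natrM h1 divff // pnatr_eq0 -lt0n fact_gt0.
Qed.

Lemma pexp_le (R : realType) (x y : R) n : 0 <= x -> x <= y -> x ^+ n <= y ^+ n.
Proof. by move=> h0 h; apply: lerXn2r; rewrite // nnegrE // (le_trans h0 h). Qed.

Lemma mvt_PP (R : realType) l (a b : R) : exists xi : R,
  `|xi - a| <= `|b - a| /\ (PP R l).[b] - (PP R l).[a] = (gp R l).[xi] * (b - a).
Proof.
have cP : forall u v : R, {within `[u, v], continuous (horner (PP R l))}.
  by move=> u v; apply: continuous_subspaceT => x; exact: (@continuous_horner _ _ x).
case: (leP a b) => hab.
  have [c] := @MVT_segment R (horner (PP R l)) (horner (gp R l)) a b hab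
      (fun x _ => is_derive_prim (gp R l) x) (cP a b).
  rewrite in_itv /= => /andP[h1 h2] ->; exists c; split => //.
  by rewrite !ger0_norm ?subr_ge0 // lerD2r.
have [c] := @MVT_segment R (horner (PP R l)) (horner (gp R l)) b a (ltW hab)
      (fun x _ => is_derive_prim (gp R l) x) (cP b a).
rewrite in_itv /= => /andP[h1 h2] h; exists c; split.
  by rewrite !ler0_norm ?subr_le0 ?(ltW hab) // lerN2 lerD2r.
by rewrite -opprB h -mulrN opprB.
Qed.

Lemma tau_err (R : realType) l (x : bool) (y : R) :
  `|tau l y - x%:R| <= cc R l * `|y - x%:R| * (`|y - x%:R| * (1 + `|y - x%:R|)) ^+ l.
Proof.
have tx : tau l (x%:R : R) = x%:R by case: x; [exact: tau1 | exact: tau0].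
have [xi [hxi hP]] := mvt_PP l (x%:R : R) y.
have -> : tau l y - x%:R = cc R l * ((gp R l).[xi] * (y - x%:R)).
  have -> : tau l y - x%:R = tau l y - tau l x%:R by rewrite tx.
  rewrite !tauE -hP; ring.
have cc0 : 0 <= cc R l by rewrite /cc mulr_ge0.
rewrite normrM (ger0_norm cc0) -mulrA; apply: ler_wpM2l => //.
rewrite normrM mulrC; apply: ler_wpM2l => //.
rewrite gpE normrM !normrX -exprMn; apply: pexp_le; first exact: mulr_ge0.
case: x tx hxi hP => /= _ hxi _.
- rewrite mulr1n in hxi *.
  have h1 : `|1 - xi| <= `|y - 1| by rewrite distrC.
  have h2 : `|xi| <= `|y - 1| + 1.
    by rewrite -[xi](subrK 1) (le_trans (ler_normD _ _)) // normr1 lerD2r distrC.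
  by rewrite mulrC; apply: ler_pM => //; rewrite addrC.
- rewrite (subr0 y) (subr0 xi) in hxi *.
  have h2 : `|1 - xi| <= 1 + `|y|.
    by rewrite (le_trans (ler_normB _ _)) // normr1 lerD2l.
  by apply: ler_pM.
Qed.

Lemma expR_half (R : realType) : expR (2^-1 : R) <= 2.
Proof.
have hE := expR_gt0 (2^-1 : R).
have H := expR_ge1Dx (- 2^-1 : R); rewrite expRN in H.
have := ler_wpM2l (ltW hE) H; rewrite mulfV ?gt_eqF //; lra.
Qed.

Lemma expR_quad (R : realType) (z : R) : z <= 2^-1 -> expR z <= 1 + z + 2 * z ^+ 2.
Proof.
move=> hz.
have hE := expR_gt0 z.
have H := expR_ge1Dx (- z); rewrite expRN in H.
have := ler_wpM2l (ltW hE) H; rewrite mulfV ?gt_eqF // => H2.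
have h3 : 0 <= z ^+ 2 * (1 - 2 * z) by apply: mulr_ge0; [exact: sqr_ge0 | lra].
nra.
Qed.

Lemma pow_le_exp (R : realType) (u lam : R) k : 0 <= u -> 0 < lam -> (0 < k)%N ->
  u ^+ k <= (k%:R / lam) ^+ k * expR (lam * u).
Proof.
move=> hu hl hk.
have k0 : 0 < (k%:R : R) by rewrite ltr0n.
set t := lam * u / k%:R.
have t0 : 0 <= t by rewrite /t divr_ge0 // ?mulr_ge0 // ltW.
have ht : t <= expR t by apply: le_trans (expR_ge1Dx t); lra.
have -> : u = (k%:R / lam) * t.
  by rewrite /t; field; rewrite !gt_eqF.
have -> : lam * (k%:R / lam * t) = k%:R * t.
  by field; rewrite gt_eqF.
rewrite exprMn expRM_natl; apply: ler_wpM2l; first by apply: exprn_ge0; rewrite divr_ge0 // ltW.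
exact: pexp_le.
Qed.

Lemma onep_le_exp (R : realType) (u : R) m : 0 <= u -> (1 + u) ^+ m <= expR (m%:R * u).
Proof.
move=> hu; rewrite expRM_natl; apply: pexp_le; first lra.
exact: expR_ge1Dx.
Qed.

Lemma abs_exp (R : realType) (a d : R) : expR (a * `|d|) <= expR (a * d) + expR (- (a * d)).
Proof.
have h1 := expR_gt0 (a * d); have h2 := expR_gt0 (- (a * d)).
case: (lerP 0 d) => hd.
  by rewrite ger0_norm //; lra.
by rewrite ltr0_norm // mulrN; lra.
Qed.

Definition GG (R : realType) (h : bool -> R) (a b : bool) : R :=
  if a && b then h true else (h true + h false) / 2.
Definition wb (R : realType) (rho : R) (b : bool) : R := if b then rho else 1 - rho.

Lemma q_bound (R : realType) (rho t : R) (x : bool) : 0 <= rho -> rho <= 1 ->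
  `|t| <= 2^-1 ->
  wb rho true * GG (fun b : bool => expR (t * (b%:R - (2^-1 + rho * x%:R / 2)))) x true
  + wb rho false * GG (fun b : bool => expR (t * (b%:R - (2^-1 + rho * x%:R / 2)))) x false
  <= expR (t ^+ 2 / 2).
Proof.
move=> r0 r1; rewrite ler_norml => /andP[ht1 ht2].
apply: le_trans (expR_ge1Dx _).
rewrite /GG /wb /=.
case: x; rewrite /= ?mulr1n ?mulr0n.
- set p := 2^-1 + rho * 1 / 2.
  have hz1 : t * (1 - p) <= 2^-1 by rewrite /p; nra.
  have hz0 : t * (0 - p) <= 2^-1 by rewrite /p; nra.
  have hA := expR_quad hz1.
  have hB := expR_quad hz0.
  move: hA hB; set A := expR (t * (1 - p)); set B := expR (t * (0 - p)) => hA hB.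
  have h1 : 0 <= rho ^+ 2 * t ^+ 2 by apply: mulr_ge0; exact: sqr_ge0.
  rewrite /p in hA hB *.
  nra.
- set p := 2^-1 + rho * 0 / 2.
  have hz1 : t * (1 - p) <= 2^-1 by rewrite /p; nra.
  have hz0 : t * (0 - p) <= 2^-1 by rewrite /p; nra.
  have hA := expR_quad hz1.
  have hB := expR_quad hz0.
  move: hA hB; set A := expR (t * (1 - p)); set B := expR (t * (0 - p)) => hA hB.
  rewrite /p in hA hB *.
  nra.
Qed.

Lemma card_neq (n : nat) (v1 : 'I_n) : #|[pred i | v1 != i]| = (n - 1)%N.
Proof.
have -> : (n - 1 = #|{: 'I_n}|.-1)%N by rewrite card_ord subn1.
rewrite -(cardC1 v1); apply: eq_card => i.
by rewrite !inE eq_sym.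
Qed.

Lemma prod_pair (R : realType) n (v1 : 'I_n) (F : 'I_n -> R) :
  \prod_(p : 'I_n * 'I_n) (if (p.1 == v1) && (p.2 != v1) then F p.2 else 1)
  = \prod_(j | v1 != j) F j.
Proof.
rewrite -(pair_bigA _ (fun i j => if (i == v1) && (j != v1) then F j else 1)) /=.
rewrite (bigD1 v1) //= [X in _ * X]big1 ?mulr1; last first.
  by move=> i hi; apply: big1 => j _; rewrite (negbTE hi).
rewrite [RHS]big_mkcond /=; apply: eq_bigr => j _.
by rewrite eqxx /= eq_sym.
Qed.


Lemma fact_Y (R : realType) n (v1 : 'I_n) (h0 : nat_of_ord v1 = 0%N)
  (v : {ffun 'I_n -> bool}) (h : bool -> R) :
  \sum_(Y : {ffun 'I_n * 'I_n -> bool})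
     prob_Y_given_v R v Y * \prod_(i | v1 != i) h (Y (v1, i))
  = \prod_(j | v1 != j) GG h (v v1) (v j).
Proof.
rewrite (eq_bigr (fun Y : {ffun 'I_n * 'I_n -> bool} => \prod_(p : 'I_n * 'I_n)
   ((if (p.1 < p.2)%N then
       (if v p.1 && v p.2 then (if Y p then 1 else 0) else 2^-1)
     else (if Y p then 0 else 1)) *
    (if (p.1 == v1) && (p.2 != v1) then h (Y p) else 1)))); last first.
  move=> Y _; rewrite -(prod_pair v1 (fun i => h (Y (v1, i)))) /prob_Y_given_v -big_split /=.
  by apply: eq_bigr => -[i j] _ /=; case: eqP => [->|].
rewrite -(bigA_distr_bigA (fun (p : 'I_n * 'I_n) (c : bool) =>
   ((if (p.1 < p.2)%N then
       (if v p.1 && v p.2 then (if c then 1 else 0) else 2^-1)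
     else (if c then 0 else 1)) *
    (if (p.1 == v1) && (p.2 != v1) then h c else 1)))) /= /= -prod_pair; apply: eq_bigr => -[i j] _ /=.
rewrite big_bool /=.
case: eqP => [->|_] /=; last by case: ifP => _; [case: ifP => _|]; rewrite !mulr1 ?addr0 ?add0r //; lra.
case: eqP => [->|hj] /=; first by rewrite ltnn !mulr1 add0r.
have -> : (v1 < j)%N.
  by rewrite h0 lt0n; apply/negP => /eqP hj0; apply: hj; apply: val_inj; rewrite /= hj0.
rewrite /GG; case: (v v1 && v j); rewrite ?mul1r ?mul0r ?addr0 //.
by rewrite mulrC [_ * h false]mulrC -mulrDl mulrC.
Qed.


Lemma fact_v (R : realType) n (v1 : 'I_n) (rho : R) (x : bool) (h : bool -> R) :
  \sum_(v : {ffun 'I_n -> bool})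
     prob_v rho v * (v v1 == x)%:R * \prod_(j | v1 != j) GG h (v v1) (v j)
  = wb rho x * (wb rho true * GG h x true + wb rho false * GG h x false) ^+ (n - 1).
Proof.
pose U (i : 'I_n) (b : bool) := if i == v1 then wb rho b * (b == x)%:R
                                 else wb rho b * GG h x b.
transitivity (\sum_(v : {ffun 'I_n -> bool}) \prod_i U i (v i)).
  apply: eq_bigr => v _.
  rewrite /prob_v (bigD1 v1) //= [RHS](bigD1 v1) //= {1}/U eqxx.
  rewrite (eq_bigl (fun j => j != v1) (fun j => GG h (v v1) (v j))); last by move=> j; rewrite eq_sym.
  case: eqP => [->|_]; last by rewrite /= mulr0n; ring.
  rewrite /= mulr1n !mulr1 /wb -mulrA -big_split /=; congr (_ * _).
  by apply: eq_bigr => i hi; rewrite /U (negbTE hi).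
rewrite -(bigA_distr_bigA U) /= (bigD1 v1) //= big_bool /U eqxx /=.
rewrite (eq_bigr (fun _ => wb rho true * GG h x true + wb rho false * GG h x false)); last first.
  by move=> i hi; rewrite big_bool (negbTE hi).
rewrite (eq_bigl [pred i | v1 != i]); last by move=> i; rewrite /= eq_sym.
rewrite prodr_const card_neq; congr (_ * _).
rewrite /U; clear U; by case: x; rewrite /= ?mulr1 ?mulr0 ?addr0 ?add0r.
Qed.

Lemma fact_all (R : realType) n (v1 : 'I_n) (h0 : nat_of_ord v1 = 0%N)
  (rho : R) (x : bool) (h : bool -> R) :
  pc_expect rho (fun v Y => (v v1 == x)%:R * \prod_(i | v1 != i) h (Y (v1, i)))
  = wb rho x * (wb rho true * GG h x true + wb rho false * GG h x false) ^+ (n - 1).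
Proof.
rewrite /pc_expect -(fact_v v1); apply: eq_bigr => v _.
rewrite -fact_Y // mulr_sumr; apply: eq_bigr => Y _.
by rewrite mulrA mulrAC [RHS]mulrAC -!mulrA.
Qed.

Lemma prob_v_ge0 (R : realType) n (rho : R) (v : {ffun 'I_n -> bool}) :
  0 <= rho -> rho <= 1 -> 0 <= prob_v rho v.
Proof. by move=> r0 r1; apply: prodr_ge0 => i _; case: (v i) => //; rewrite subr_ge0. Qed.

Lemma prob_Y_ge0 (R : realType) n (v : {ffun 'I_n -> bool}) Y :
  0 <= prob_Y_given_v R v Y.
Proof.
apply: prodr_ge0 => p _; case: ifP => _; last by case: (Y p).
by case: ifP => _; [case: (Y p)| rewrite invr_ge0].
Qed.

Lemma pc_le (R : realType) n (rho : R) (F G : {ffun 'I_n -> bool} -> {ffun 'I_n * 'I_n -> bool} -> R) :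
  0 <= rho -> rho <= 1 -> (forall v Y, F v Y <= G v Y) ->
  pc_expect rho F <= pc_expect rho G.
Proof.
move=> r0 r1 FG; apply: ler_sum => v _; apply: ler_sum => Y _.
apply: ler_wpM2l => //; apply: mulr_ge0; [exact: prob_v_ge0 | exact: prob_Y_ge0].
Qed.

Lemma pc_add (R : realType) n (rho : R) (F G : {ffun 'I_n -> bool} -> {ffun 'I_n * 'I_n -> bool} -> R) :
  pc_expect rho (fun v Y => F v Y + G v Y) = pc_expect rho F + pc_expect rho G.
Proof.
rewrite /pc_expect -big_split; apply: eq_bigr => v _.
rewrite -big_split; apply: eq_bigr => Y _; exact: mulrDr.
Qed.

Lemma pc_scale (R : realType) n (rho : R) c (F : {ffun 'I_n -> bool} -> {ffun 'I_n * 'I_n -> bool} -> R) :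
  pc_expect rho (fun v Y => c * F v Y) = c * pc_expect rho F.
Proof.
rewrite /pc_expect mulr_sumr; apply: eq_bigr => v _.
rewrite mulr_sumr; apply: eq_bigr => Y _; ring.
Qed.

Lemma pw (R : realType) l (x : bool) (y lam : R) : 0 < lam ->
  (tau l y - x%:R) ^+ 2 <= cc R l ^+ 2 * ((2 * l + 2)%:R / lam) ^+ (2 * l + 2) *
    (expR ((lam + (2 * l)%:R) * (y - x%:R)) + expR (- ((lam + (2 * l)%:R) * (y - x%:R)))).
Proof.
move=> hl.
have h1 := tau_err l x y.
move: h1; set d := y - x%:R; set u := `|d| => h1.
have u0 : 0 <= u by exact: normr_ge0.
have cc0 : 0 <= cc R l by rewrite /cc mulr_ge0.
rewrite -real_normK ?num_real //.
apply: (le_trans (pexp_le 2 (normr_ge0 _) h1)).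
have e1 : (cc R l * u * (u * (1 + u)) ^+ l) ^+ 2
   = cc R l ^+ 2 * (u ^+ (2 * l + 2) * (1 + u) ^+ (2 * l)).
  rewrite !exprMn -!exprM -mulrA; congr (_ * _).
  rewrite mulrA -exprD; congr (_ ^+ _ * _); last by rewrite mulnC.
  by rewrite mulnC addnC.
rewrite e1 -mulrA; apply: ler_wpM2l; first exact: exprn_ge0.
apply: (@le_trans _ _ (((2 * l + 2)%:R / lam) ^+ (2 * l + 2) * expR ((lam + (2 * l)%:R) * u))); last first.
  apply: ler_wpM2l; last exact: abs_exp.
  by apply: exprn_ge0; rewrite divr_ge0 // ltW.
rewrite mulrDl expRD mulrA.
apply: ler_pM.
- exact: exprn_ge0.
- by apply: exprn_ge0; rewrite addr_ge0.
- by apply: pow_le_exp; rewrite // addn2.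
- exact: onep_le_exp.
Qed.

Lemma pc_ext (R : realType) n (rho : R) (F G : {ffun 'I_n -> bool} -> {ffun 'I_n * 'I_n -> bool} -> R) :
  (forall v Y, F v Y = G v Y) -> pc_expect rho F = pc_expect rho G.
Proof. by move=> FG; apply: eq_bigr => v _; apply: eq_bigr => Y _; rewrite FG. Qed.

Definition pp (R : realType) (rho : R) (x : bool) : R := 2^-1 + rho * x%:R / 2.
Definition hh (R : realType) (rho t : R) (x b : bool) : R := expR (t * (b%:R - pp rho x)).

Lemma expect_bound (R : realType) n (v1 : 'I_n) (h0 : nat_of_ord v1 = 0%N)
  (rho : R) (r0 : 0 <= rho) (r1 : rho <= 1) (x0 : bool) (t : R) (ht : `|t| <= 2^-1) :
  pc_expect rho (fun v Y => (v v1 == x0)%:R * \prod_(i | v1 != i) hh rho t x0 (Y (v1, i)))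
  <= wb rho x0 * expR ((n - 1)%:R * (t ^+ 2 / 2)).
Proof.
rewrite fact_all // expRM_natl.
have w0 : 0 <= wb rho x0 by rewrite /wb; case: x0 => //; rewrite subr_ge0.
apply: ler_wpM2l => //; apply: pexp_le; last exact: q_bound.
have e0 := fun b => expR_ge0 (t * (b%:R - pp rho x0)).
rewrite /GG /wb /hh; apply: addr_ge0; apply: mulr_ge0; rewrite ?subr_ge0 //;
  case: ifP => _; rewrite ?divr_ge0 ?addr_ge0 //.
Qed.

Lemma d_identity (R : realType) n (v1 : 'I_n) (hn : (2 <= n)%N) (rho : R) (r0 : 0 < rho)
   (x : bool) (Y : {ffun 'I_n * 'I_n -> bool}) :
  (2 / rho) * ((n - 1)%:R^-1 * (\sum_(i : 'I_n | v1 != i) (Y (v1, i))%:R) - 2^-1) - x%:R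
  = \sum_(i : 'I_n | v1 != i) (2 / (rho * (n - 1)%:R)) * ((Y (v1, i))%:R - pp rho x).
Proof.
have N0 : (n - 1)%:R != 0 :> R by rewrite pnatr_eq0 subn_eq0 -ltnNge (leq_trans _ hn).
rewrite -mulr_sumr sumrB sumr_const card_neq /pp -mulr_natr.
set S := \sum_(i | v1 != i) _.
field.
by rewrite N0 gt_eqF.
Qed.

Lemma exp_prod (R : realType) n (v1 : 'I_n) (c : R) (f : 'I_n -> R) :
  expR (c * \sum_(i : 'I_n | v1 != i) f i) = \prod_(i : 'I_n | v1 != i) expR (c * f i).
Proof. by rewrite mulr_sumr expR_sum. Qed.

Lemma bin_le_exp n m : ('C(n, m) <= 2 ^ n)%N.
Proof.
elim: n m => [|n IH] [|m] //=.
- by rewrite bin0 expn_gt0.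
- by rewrite binS expnS mul2n -addnn leq_add.
Qed.

Lemma nat_fin l : (2 * ((2 * l + 1) * 'C(2 * l, l)) ^ 2 * 2 ^ (l + 1)
   <= (2 * l + 1) ^ 2 * 8 ^ (2 * l + 2))%N.
Proof.
have hC := bin_le_exp (2 * l) l.
have e1 : (2 ^ (2 * l) = (2 ^ l) ^ 2)%N by rewrite -expnM mulnC.
have e2 : (8 ^ (2 * l + 2) = ((2 ^ l) ^ 3) ^ 2 * 64)%N.
  rewrite expnD -expnM -expnM (_ : 8 = 2 ^ 3)%N // -expnM; congr (2 ^ _ * _)%N; by rewrite mulnA mulnC.
rewrite e2 expnD expn1; rewrite e1 in hC.
have b1 : (1 <= 2 ^ l)%N by rewrite expn_gt0.
move: hC b1; set b := (2 ^ l)%N; set c := 'C(2 * l, l); set A := (2 * l + 1)%N => hC b1.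
apply: (@leq_trans (2 * (A * b ^ 2) ^ 2 * (b * 2))).
  by rewrite leq_mul2r leq_mul2l leq_exp2r // leq_mul2l hC !orbT.
have -> : (2 * (A * b ^ 2) ^ 2 * (b * 2) = A ^ 2 * (4 * b ^ 5))%N by ring.
have -> : (A ^ 2 * ((b ^ 3) ^ 2 * 64) = A ^ 2 * (64 * b ^ 6))%N by ring.
rewrite leq_mul2l; apply/orP; right; apply: leq_mul => //.
by rewrite leq_pexp2l.
Qed.

Lemma fin_num (R : realType) l (r E : R) : 0 < r -> r <= 1 -> E * 2 <= (l + 1)%:R ->
  2 * (cc R l ^+ 2 * (r / 8) ^+ (2 * l + 2)) * expR E <= (2 * l + 1)%:R ^+ 2 * r ^+ (2 * l).
Proof.
move=> r0 r1 hE.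
have hE2 : expR E <= 2 ^+ (l + 1).
  apply: (@le_trans _ _ (expR ((l + 1)%:R * 2^-1))).
    by rewrite ler_expR; lra.
  by rewrite expRM_natl; apply: pexp_le; [exact: expR_ge0 | exact: expR_half].
have hn : (2 * cc R l ^+ 2 * 2 ^+ (l + 1) <= (2 * l + 1)%:R ^+ 2 * 8 ^+ (2 * l + 2) :> R).
  have := nat_fin l; rewrite -(ler_nat R) => h.
  by rewrite /cc -natrM -!natrX -!natrM.
have K0 : 0 < (8 : R) ^+ (2 * l + 2) by apply: exprn_gt0.
have e : (r / 8) ^+ (2 * l + 2) = r ^+ (2 * l) * r ^+ 2 / 8 ^+ (2 * l + 2).
  by rewrite expr_div_n exprD.
rewrite e.
have X0 : 0 <= cc R l ^+ 2 by apply: sqr_ge0.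
have Q0 : 0 <= r ^+ (2 * l) by apply: exprn_ge0; apply: ltW.
have r20 : 0 <= r ^+ 2 by apply: sqr_ge0.
have r21 : r ^+ 2 <= 1 by nra.
have T0 : 0 <= r ^+ (2 * l) * r ^+ 2 / 8 ^+ (2 * l + 2).
  by rewrite divr_ge0 ?mulr_ge0 // ltW.
apply: (@le_trans _ _ (2 * (cc R l ^+ 2 * (r ^+ (2 * l) * r ^+ 2 / 8 ^+ (2 * l + 2))) * 2 ^+ (l + 1))).
  by apply: ler_wpM2l => //; rewrite mulr_ge0 // mulr_ge0.
have -> : 2 * (cc R l ^+ 2 * (r ^+ (2 * l) * r ^+ 2 / 8 ^+ (2 * l + 2))) * 2 ^+ (l + 1)
   = (2 * cc R l ^+ 2 * 2 ^+ (l + 1)) * (r ^+ (2 * l) * r ^+ 2 / 8 ^+ (2 * l + 2)) by ring.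
apply: le_trans (ler_wpM2r T0 hn) _.
have -> : (2 * l + 1)%:R ^+ 2 * 8 ^+ (2 * l + 2) * (r ^+ (2 * l) * r ^+ 2 / 8 ^+ (2 * l + 2))
   = (2 * l + 1)%:R ^+ 2 * r ^+ (2 * l) * r ^+ 2 :> R.
  by field; rewrite gt_eqF.
rewrite -[X in _ <= X]mulr1; apply: ler_wpM2l => //.
by apply: mulr_ge0 => //; apply: sqr_ge0.
Qed.

Lemma e3_lem (R : realType) (N t rho r a : R) : t * (rho * N) = 2 * a ->
  N * (t ^+ 2 / 2) * 2 * (rho ^+ 2 * (r ^+ 2 * N)) = 4 * (a * r) ^+ 2.
Proof.
move=> h; have -> : 4 * (a * r) ^+ 2 = (t * (rho * N)) ^+ 2 * r ^+ 2 by rewrite h; ring.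
by field.
Qed.

Unset Implicit Arguments.
Local Close Scope classical_set_scope.

Theorem mainTheorem14 (R : realType) (n : nat) (hn : (2 <= n)%N)
    (rho : R) (hrho0 : 0 < rho) (hrho1 : rho < 1) (hrho2 : rho <= 2^-1)
    (l : nat) (r : R) (hr0 : 0 < r) (hr1 : r < 1) :
  let D := (2 * l + 1)%N in
  let v1 : 'I_n := Ordinal (ltnW hn) in
  rho ^+ 2 >= 432 / (r ^+ 2 * (n - 1)%:R) *
                (ln 4 + 3 * D%:R * ln (9 / rho)) ->
  pc_expect rho (fun v Y => (f_est v1 rho l Y - (v v1)%:R) ^+ 2)
    <= D%:R ^+ 2 * r ^+ (D - 1).
Proof.
move=> D v1 H.
have h0 : nat_of_ord v1 = 0%N by [].
have Nr0 : 0 < (n - 1)%:R :> R by rewrite ltr0n subn_gt0.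
have Nr1 : 1 <= (n - 1)%:R :> R by rewrite ler1n subn_gt0.
move: H Nr0 Nr1; set Nr := (n - 1)%:R => H Nr0 Nr1.
set k := (2 * l + 2)%N.
set lam : R := 8 * k%:R / r.
have lam0 : 0 < lam by rewrite /lam divr_gt0 // mulr_gt0 // ltr0n /k addn2.
set a : R := lam + (2 * l)%:R.
set t : R := a * (2 / (rho * Nr)).
set C0 : R := cc R l ^+ 2 * (k%:R / lam) ^+ k.
have C00 : 0 <= C0.
  by rewrite /C0; apply: mulr_ge0; apply: exprn_ge0; [rewrite /cc mulr_ge0 | rewrite divr_ge0 // ltW].
pose P (s : R) (x0 : bool) (Y : {ffun 'I_n * 'I_n -> bool}) :=
  \prod_(i | v1 != i) hh rho s x0 (Y (v1, i)).
pose G1 (x0 : bool) (v : {ffun 'I_n -> bool}) (Y : {ffun 'I_n * 'I_n -> bool}) :=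
  C0 * ((v v1 == x0)%:R * P t x0 Y) + C0 * ((v v1 == x0)%:R * P (- t) x0 Y).
have P0 : forall s x0 Y, 0 <= P s x0 Y.
  by move=> s x0 Y; apply: prodr_ge0 => i _; exact: expR_ge0.
have G10 : forall x0 v Y, 0 <= G1 x0 v Y.
  by move=> x0 v Y; rewrite /G1 addr_ge0 // mulr_ge0 // mulr_ge0.
have pwb : forall (v : {ffun 'I_n -> bool}) (Y : {ffun 'I_n * 'I_n -> bool}), (f_est v1 rho l Y - (v v1)%:R) ^+ 2 <= G1 true v Y + G1 false v Y.
  move=> v Y.
  have hp := pw l (v v1) (2 / rho * (Nr^-1 * (\sum_(i | v1 != i) (Y (v1, i))%:R) - 2^-1)) lam0.
  rewrite (d_identity v1 hn hrho0) -mulNr !exp_prod in hp.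
  apply: (@le_trans _ _ (G1 (v v1) v Y)); last first.
    case: (v v1); [rewrite lerDl | rewrite lerDr]; exact: G10.
  apply: (le_trans hp); rewrite /G1 eqxx !mul1r -mulrDr le_eqVlt; apply/orP; left; apply/eqP.
  rewrite /C0 /P /hh; congr (_ * (_ + _)); apply: eq_bigr => i _; congr (expR _).
    by rewrite mulrA.
  by rewrite mulrA mulNr.
have Dr1 : 1 <= D%:R :> R by rewrite ler1n /D addn1.
have hDr : D%:R = 2 * l%:R + 1 :> R by rewrite /D natrD natrM.
have hk : k%:R = 2 * l%:R + 2 :> R by rewrite /k natrD natrM.
have h2l : (2 * l)%:R = 2 * l%:R :> R by rewrite natrM.
have l0 : 0 <= l%:R :> R by [].
have L1 : 0 <= ln (4 : R) by apply: ln_ge0; lra.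
have L2 : 1 <= ln (9 / rho).
  have e1 : expR (1 : R) <= 4.
    have -> : (1 : R) = 2%:R * 2^-1 by rewrite divff.
    rewrite expRM_natl; apply: le_trans (pexp_le 2 (expR_ge0 _) (expR_half R)) _.
    by rewrite expr2; lra.
  have e2 : 4 <= 9 / rho by rewrite ler_pdivlMr //; lra.
  rewrite -[X in X <= _](expRK 1) ler_ln ?posrE ?expR_gt0 ?divr_gt0 //.
  exact: le_trans e1 e2.
have hX : 3 * D%:R <= ln 4 + 3 * D%:R * ln (9 / rho) by nra.
have rN0 : 0 < r ^+ 2 * Nr by rewrite mulr_gt0 // exprn_gt0.
have hQ : 1296 * D%:R <= rho ^+ 2 * (r ^+ 2 * Nr).
  have := ler_wpM2r (ltW rN0) H.
  rewrite (_ : 432 / (r ^+ 2 * Nr) * (ln 4 + 3 * D%:R * ln (9 / rho)) * (r ^+ 2 * Nr)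
     = 432 * (ln 4 + 3 * D%:R * ln (9 / rho))); last by field; rewrite !gt_eqF.
  lra.
have ha : a * r = 8 * k%:R + 2 * l%:R * r.
  by rewrite /a /lam h2l; field; rewrite gt_eqF.
have ha9 : a * r <= 9 * k%:R by rewrite ha hk; nra.
have a0 : 0 <= a by rewrite /a addr_ge0 // ltW.
have M0 : 0 < rho * Nr by rewrite mulr_gt0.
have htM : t * (rho * Nr) = 2 * a by rewrite /t; field; rewrite !gt_eqF.
have t0 : 0 <= t by rewrite /t mulr_ge0 // divr_ge0 // ltW.
have h4 : 4 * a * r ^+ 2 <= rho * Nr * r ^+ 2.
  have h5 : 4 * a * r ^+ 2 <= 36 * k%:R * r by nra.
  have h6 : rho ^+ 2 * (r ^+ 2 * Nr) <= rho * Nr * r ^+ 2 by nra.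
  nra.
have h4' : 4 * a <= rho * Nr.
  by rewrite -(ler_pM2r (exprn_gt0 2 hr0)).
have tb : `|t| <= 2^-1.
  rewrite ger0_norm //; nra.
have E1 : pc_expect rho (fun v Y => G1 true v Y + G1 false v Y)
   <= 2 * C0 * expR (Nr * (t ^+ 2 / 2)).
  have Eb : forall x0, pc_expect rho (G1 x0) <= 2 * C0 * (wb rho x0 * expR (Nr * (t ^+ 2 / 2))).
    move=> x0; rewrite /G1 pc_add !pc_scale.
    have b1 := expect_bound h0 (ltW hrho0) (ltW hrho1) x0 tb.
    have tb' : `|- t| <= 2^-1 by rewrite normrN.
    have b2 := expect_bound h0 (ltW hrho0) (ltW hrho1) x0 tb'.
    rewrite sqrrN in b2.
    apply: le_trans (lerD (ler_wpM2l C00 b1) (ler_wpM2l C00 b2)) _.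
    by rewrite le_eqVlt; apply/orP; left; apply/eqP; rewrite -/Nr; ring.
  rewrite pc_add; apply: le_trans (lerD (Eb true) (Eb false)) _.
  by rewrite le_eqVlt; apply/orP; left; apply/eqP; rewrite /wb /=; ring.
have fin : 2 * C0 * expR (Nr * (t ^+ 2 / 2)) <= D%:R ^+ 2 * r ^+ (D - 1).
  have kl : k%:R / lam = r / 8 by rewrite /lam; field; rewrite hk !gt_eqF //; lra.
  have hE : Nr * (t ^+ 2 / 2) * 2 <= (l + 1)%:R.
    have e3 : Nr * (t ^+ 2 / 2) * 2 * (rho ^+ 2 * (r ^+ 2 * Nr)) = 4 * (a * r) ^+ 2.
      exact: e3_lem.
    have e4 : 4 * (a * r) ^+ 2 <= 324 * k%:R ^+ 2.
      have : 0 <= a * r by rewrite mulr_ge0 // ltW.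
      nra.
    have E0 : 0 <= Nr * (t ^+ 2 / 2) * 2 by apply: mulr_ge0 => //; apply: mulr_ge0; [exact: ltW | rewrite divr_ge0 // sqr_ge0].
    have e5 : Nr * (t ^+ 2 / 2) * 2 * (1296 * D%:R) <= 324 * k%:R ^+ 2.
      apply: le_trans e4; rewrite -e3; exact: ler_wpM2l.
    rewrite natrD hk in e5 *; rewrite hDr in e5.
    nra.
  rewrite /C0 kl /D addnK.
  exact: (fin_num hr0 (ltW hr1) hE).
apply: le_trans fin; apply: le_trans E1.
by apply: pc_le => //; apply: ltW.
Qed.
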